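(* Let $R$ be a commutative domain, $B=R(t,\sigma,H,J)$, assume $\sigma^n=\mathrm{id}_R$ and let $\mathcal O$ be a $\sigma$-orbit in $\operatorname{Maxspec}(R)$ of size $n$ containing no breaks. Let $M$ be a simple $B$-module which is an $R$-weight module with $\operatorname{Supp}_R(M)\subseteq\mathcal O$. Then for each $\mathfrak m\in\mathcal O$, $M_{\mathfrak m}$ is a simple $\Lambda_n/(\mathfrak m)$-module, and for all $i\in\mathbb Z$, $M_{\sigma^i(\mathfrak m)}\cong{}^{\sigma^i}M_{\mathfrak m}$ as $\Lambda_n/(\sigma^i(\mathfrak m))$-modules.
   Context: $\Bbbk$ is a field; all algebras are associative unital $\Bbbk$-algebras. For an algebra $R$ and $\sigma\in\operatorname{Aut}_\Bbbk(R)$, $R[t,t^{-1};\sigma]$ is the skew Laurent ring: generated over $R$ by $t,t^{-1}$ with $tt^{-1}=t^{-1}t=1$ and $t^{\pm1}r=\sigma^{\pm1}(r)t^{\pm1}$ for $r\in R$. Given two-sided ideals $H,J$ of $R$, set $I^{(0)}=R$, $I^{(n)}=J\sigma(J)\cdots\sigma^{n-1}(J)$ for $n\ge1$, and $I^{(n)}=\sigma^{-1}(H)\sigma^{-2}(H)\cdots\sigma^{n}(H)$ for $n\le-1$; it is assumed throughout that $I^{(n)}\neq0$ for all $n\in\mathbb Z$. The Bell–Rogalski (BR) algebra is $R(t,\sigma,H,J)=\bigoplus_{n\in\mathbb Z}I^{(n)}t^n\subseteq R[t,t^{-1};\sigma]$; $B_k=I^{(k)}t^k$. For $R$ commutative,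 $\mathcal S(B)=\{\mathfrak p\in\operatorname{Spec}(R):\mathfrak p\supseteq HJ\}$; a maximal ideal $\mathfrak m$ is a break if $\sigma(\mathfrak m)\in\mathcal S(B)$. A left $B$-module $M$ is an $R$-weight module if $M=\bigoplus_{\mathfrak m\in\operatorname{Maxspec}(R)}M_{\mathfrak m}$, $M_{\mathfrak m}=\{v:\mathfrak mv=0\}$, each $\dim_{R/\mathfrak m}M_{\mathfrak m}<\infty$. $\sigma$-orbits are orbits of $k\cdot\mathfrak m=\sigma^k(\mathfrak m)$. With $\sigma^n=\mathrm{id}$: $\Lambda_n=\bigoplus_{k\in\mathbb Z}B_{kn}$ (the $n$-th Veronese subalgebra); for $\mathfrak m\in\mathcal O$, $(\mathfrak m)=\mathfrak m\Lambda_n=\Lambda_n\mathfrak m$ is a two-sided ideal of $\Lambda_n$; $\sigma$ acts on $\Lambda_n$ by $\sigma(at^{kn})=\sigma(a)t^{kn}$, inducing $\Lambda_n/(\mathfrak m)\cong\Lambda_n/(\sigma^i(\mathfrak m))$. For a $\Lambda_n/(\mathfrak m)$-module $N$, ${}^{\sigma^i}N$ is the $\Lambda_n/(\sigma^i(\mathfrak m))$-module equal to $N$ as a set (elements written ${}^{\sigma^i}v$) with action $\lambda\cdot{}^{\sigma^i}v={}^{\sigma^i}(\sigma^{-i}(\lambda)v)$. *)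

(* Defs.v *)
From mathcomp Require Import all_boot all_order all_algebra.
From Stdlib Require List.
Set Implicit Arguments. Unset Strict Implicit. Unset Printing Implicit Defensive.
Import Order.TTheory GRing.Theory Num.Theory.
Local Open Scope ring_scope.

Section BR.
Variable (R : comNzRingType).

Definition is_ideal (I : R -> Prop) : Prop :=
  [/\ I 0, (forall a b, I a -> I b -> I (a + b)) & (forall r a, I a -> I (r * a))].

Definition is_maximal (m : R -> Prop) : Prop :=
  [/\ is_ideal m, ~ m 1 &
      forall I : R -> Prop, is_ideal I -> (forall x, m x -> I x) ->
        (forall x, I x -> m x) \/ I 1].

Definition seteq (X Y : R -> Prop) : Prop := forall x, X x <-> Y x.
Definition ssubset (X Y : R -> Prop) : Prop := forall x, X x -> Y x.

Definition fullI : R -> Prop := fun _ => True.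

Definition idmul (I J : R -> Prop) : R -> Prop := fun x =>
  exists s : seq (R * R), (forall p, p \in s -> I p.1 /\ J p.2) /\
                          x = \sum_(p <- s) p.1 * p.2.

Variables (sigma sigmainv : R -> R).

(* sigma^k as a map R -> R, k : int; sigmainv is the inverse of sigma *)
Definition sigpow (k : int) : R -> R :=
  match k with
  | Posz n => iter n sigma
  | Negz n => iter n.+1 sigmainv
  end.

(* sigma^k(X) = { sigma^k y | y in X } = { x | sigma^{-k} x in X } *)
Definition simg (k : int) (X : R -> Prop) : R -> Prop :=
  fun x => X (sigpow (- k) x).

Definition prodI (l : seq (R -> Prop)) : R -> Prop := foldr idmul fullI l.

Definition Ik (H J : R -> Prop) (k : int) : R -> Prop :=
  match k with
  | Posz n => prodI [seq simg (Posz j) J | j <- iota 0 n]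
  | Negz n => prodI [seq simg (- (Posz j.+1)) H | j <- iota 0 n.+1]
  end.

(* A left B-module, B = (+)_k I^(k) t^k, is given by the action
   act k a v = (a t^k) . v  for a in I^(k); module axioms: *)
Definition is_BR_module (H J : R -> Prop) (M : zmodType)
    (act : int -> R -> M -> M) : Prop :=
  [/\ (forall k a b v, Ik H J k a -> Ik H J k b ->
          act k (a + b) v = act k a v + act k b v),
      (forall k a v w, Ik H J k a -> act k a (v + w) = act k a v + act k a w),
      (forall v, act 0 1 v = v) &
      (forall k l a b v, Ik H J k a -> Ik H J l b ->
          act k a (act l b v) = act (k + l) (a * sigpow k b) v)].

(* the weight space M_m = { v | m v = 0 } (R = B_0 acts by act 0) *)
Definition wspace (M : zmodType) (act : int -> R -> M -> M)
    (m : R -> Prop) : M -> Prop :=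
  fun v => forall a, m a -> act 0 a v = 0.

Definition is_weight_module (M : zmodType) (act : int -> R -> M -> M) : Prop :=
  [/\
      (forall v : M, exists s : seq ((R -> Prop) * M),
          (forall p, List.In p s -> is_maximal p.1 /\ wspace act p.1 p.2) /\
          v = foldr (fun p acc => p.2 + acc) 0 s),
      (forall s : seq ((R -> Prop) * M),
          (forall p, List.In p s -> is_maximal p.1 /\ wspace act p.1 p.2) ->
          (forall i j, (i < size s)%N -> (j < size s)%N -> i <> j ->
              ~ seteq (List.nth i s (fullI, 0)).1 (List.nth j s (fullI, 0)).1) ->
          foldr (fun p acc => p.2 + acc) 0 s = 0 ->
          forall p, List.In p s -> p.2 = 0) &
      (* each M_m is finite-dimensional over R/m: finitely spanned *)
      (forall m, is_maximal m -> exists gens : seq M,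
          (forall g, List.In g gens -> wspace act m g) /\
          (forall w, wspace act m w -> exists cs : seq R,
              size cs = size gens /\
              w = foldr (fun p acc => act 0 p.1 p.2 + acc) 0 (zip cs gens)))].

Definition is_simple_B_module (H J : R -> Prop) (M : zmodType)
    (act : int -> R -> M -> M) : Prop :=
  (exists v : M, v <> 0) /\
  forall S : M -> Prop,
    S 0 -> (forall v w, S v -> S w -> S (v + w)) -> (forall v, S v -> S (- v)) ->
    (forall k a v, Ik H J k a -> S v -> S (act k a v)) ->
    (forall v, S v -> v = 0) \/ (forall v, S v).

(* W (a subset of M stable under Lambda_n = (+)_k B_{kn}) is a simple
   Lambda_n-module (equivalently Lambda_n/(m)-module when annihilated by m) *)
Definition is_simple_Lambda_module (H J : R -> Prop) (n : nat) (M : zmodType)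
    (act : int -> R -> M -> M) (W : M -> Prop) : Prop :=
  (exists v : M, W v /\ v <> 0) /\
  forall S : M -> Prop, (forall v, S v -> W v) ->
    S 0 -> (forall v w, S v -> S w -> S (v + w)) -> (forall v, S v -> S (- v)) ->
    (forall (k : int) a v, Ik H J (k * n%:Z) a -> S v -> S (act (k * n%:Z) a v)) ->
    (forall v, S v -> v = 0) \/ (forall v, W v -> S v).

(* M_{m'} ~= ^{sigma^i} M_m as Lambda_n-modules:
   f : ^{sigma^i}M_m -> M_{m'} additive bijection with
   f (sigma^{-i}(lam) . v) = lam . f v *)
Definition twisted_iso (H J : R -> Prop) (n : nat) (M : zmodType)
    (act : int -> R -> M -> M) (i : int) (W W' : M -> Prop) : Prop :=
  exists f : M -> M,
    [/\ (forall v, W v -> W' (f v)),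
        (forall v w, W v -> W w -> f (v + w) = f v + f w),
        (forall v w, W v -> W w -> f v = f w -> v = w),
        (forall w, W' w -> exists v, W v /\ f v = w) &
        (forall (k : int) a v, Ik H J (k * n%:Z) a -> W v ->
            f (act (k * n%:Z) (sigpow (- i) a) v) = act (k * n%:Z) a (f v))].

End BR.

(* Main.v *)
Require Import Defs.
From mathcomp Require Import all_boot all_order all_algebra.
From mathcomp Require Import zify ring.
From Stdlib Require Import Classical.
Set Implicit Arguments. Unset Strict Implicit. Unset Printing Implicit Defensive.
Import GRing.Theory.
Local Open Scope ring_scope.


Section Sig.
Variables (k : fieldType) (R : comAlgType k).
Variables (sigma : {lrmorphism R -> R}) (sigmainv : R -> R).
Hypotheses (sK : cancel sigma sigmainv) (sK' : cancel sigmainv sigma).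

Local Notation sp := (sigpow sigma sigmainv).

Lemma sigpowS z x : sp (z + 1) x = sigma (sp z x).
Proof.
case: z => [n|n].
  have -> : (Posz n + 1 = Posz n.+1)%R by lia.
  by [].

case: n => [|n].
  by rewrite /= sK'.
have -> : (Negz n.+1 + 1 = Negz n)%R by rewrite !NegzE; lia.
by rewrite /= sK'.
Qed.

Lemma int_ind3 (P : int -> Prop) : P 0 -> (forall z, P z -> P (z + 1)) ->
  (forall z, P z -> P (z - 1)) -> forall z, P z.
Proof.
move=> P0 PS PP [n|n].
  elim: n => // n IH; have -> : Posz n.+1 = (Posz n + 1)%R by lia. exact: PS.
elim: n => [|n IH].
  have -> : Negz 0 = (0 - 1)%R by []. exact: PP.
have -> : Negz n.+1 = (Negz n - 1)%R by rewrite !NegzE; lia. exact: PP.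
Qed.

Lemma sigpowP z x : sp (z - 1) x = sigmainv (sp z x).
Proof. by rewrite -{2}(subrK 1 z) sigpowS sK. Qed.

Lemma sigpow0 x : sp 0 x = x. Proof. by []. Qed.

Lemma sigpow_add a b x : sp (a + b) x = sp a (sp b x).
Proof.
elim/int_ind3: a x => [x|z IH x|z IH x]; first by rewrite add0r.
  by rewrite -addrA (addrC 1) addrA sigpowS IH sigpowS.
by rewrite addrAC sigpowP IH sigpowP.
Qed.

Lemma sigpowK a x : sp a (sp (- a) x) = x.
Proof. by rewrite -sigpow_add subrr. Qed.

Lemma sigpowKN a x : sp (- a) (sp a x) = x.
Proof. by rewrite -sigpow_add addNr. Qed.

Lemma sinvM x y : sigmainv (x * y) = sigmainv x * sigmainv y.
Proof. by rewrite -{1}(sK' x) -{1}(sK' y) -rmorphM sK. Qed.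
Lemma sinvD x y : sigmainv (x + y) = sigmainv x + sigmainv y.
Proof. by rewrite -{1}(sK' x) -{1}(sK' y) -rmorphD sK. Qed.
Lemma sinv1 : sigmainv 1 = 1.
Proof. by rewrite -{1}(rmorph1 sigma) sK. Qed.
Lemma sinv0 : sigmainv 0 = 0.
Proof. by rewrite -{1}(rmorph0 sigma) sK. Qed.

Lemma sigpow_morph z :
  [/\ forall x y, sp z (x * y) = sp z x * sp z y,
      forall x y, sp z (x + y) = sp z x + sp z y,
      sp z 1 = 1 & sp z 0 = 0].
Proof.
elim/int_ind3: z => [|z [M D O Z]|z [M D O Z]]; first by split.
  by split=> [x y|x y||]; rewrite !sigpowS ?M ?D ?O ?Z ?rmorphM ?rmorphD ?rmorph1 ?rmorph0.
by split=> [x y|x y||]; rewrite !sigpowP ?M ?D ?O ?Z ?sinvM ?sinvD ?sinv1 ?sinv0.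
Qed.

Lemma sigpowM z x y : sp z (x * y) = sp z x * sp z y.
Proof. by case: (sigpow_morph z). Qed.
Lemma sigpowD z x y : sp z (x + y) = sp z x + sp z y.
Proof. by case: (sigpow_morph z). Qed.
Lemma sigpow1 z : sp z 1 = 1.
Proof. by case: (sigpow_morph z). Qed.
Lemma sigpow00 z : sp z 0 = 0.
Proof. by case: (sigpow_morph z). Qed.

End Sig.


Section Ideals.
Variable (R : comNzRingType).
Implicit Types (I J K X Y : R -> Prop).

Lemma idmul0 I J : idmul I J 0.
Proof. by exists [::]; split => //; rewrite big_nil. Qed.

Lemma idmulD I J x y : idmul I J x -> idmul I J y -> idmul I J (x + y).
Proof.
move=> [s [Hs ->]] [t [Ht ->]]; exists (s ++ t); split; last by rewrite big_cat.
by move=> p; rewrite mem_cat => /orP [/Hs|/Ht].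
Qed.

Lemma idmul1 I J a b : I a -> J b -> idmul I J (a * b).
Proof.
move=> Ia Jb; exists [:: (a, b)]; split; last by rewrite big_cons big_nil addr0.
by move=> p; rewrite inE => /eqP ->.
Qed.

Lemma idmul_ind I J (P : R -> Prop) : P 0 -> (forall x y, P x -> P y -> P (x + y)) ->
  (forall a b, I a -> J b -> P (a * b)) -> forall x, idmul I J x -> P x.
Proof.
move=> P0 PD PM x [s [Hs ->]]; elim: s Hs => [|p s IH] Hs; first by rewrite big_nil.
rewrite big_cons; apply: PD; last by apply: IH => q qs; apply: Hs; rewrite inE qs orbT.
by case: (Hs p); rewrite ?inE ?eqxx // => ??; apply: PM.
Qed.

Lemma idmul_mono I J I' J' : ssubset I I' -> ssubset J J' ->
  ssubset (idmul I J) (idmul I' J').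
Proof.
move=> HI HJ; apply: idmul_ind; [exact: idmul0|exact: idmulD|].
by move=> a b /HI ? /HJ ?; apply: idmul1.
Qed.

Lemma idmulC I J : ssubset (idmul I J) (idmul J I).
Proof.
apply: idmul_ind; [exact: idmul0|exact: idmulD|].
by move=> a b ? ?; rewrite mulrC; apply: idmul1.
Qed.

Lemma idmul_lmul I J a x : idmul I J x -> (forall r y, I y -> I (r * y)) ->
  idmul I J (a * x).
Proof.
move=> Hx HI; move: x Hx; apply: (@idmul_ind I J (fun x => idmul I J (a * x))).
- by rewrite mulr0; apply: idmul0.
- by move=> x y ? ?; rewrite mulrDr; apply: idmulD.
- by move=> b c ? ?; rewrite mulrA; apply: idmul1 => //; apply: HI.
Qed.

Lemma idmul_rmul I J a x : idmul I J x -> (forall r y, J y -> J (r * y)) ->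
  idmul I J (a * x).
Proof.
move=> Hx HJ; move: x Hx; apply: (@idmul_ind I J (fun x => idmul I J (a * x))).
- by rewrite mulr0; apply: idmul0.
- by move=> x y ? ?; rewrite mulrDr; apply: idmulD.
- by move=> b c ? ?; rewrite mulrCA; apply: idmul1 => //; apply: HJ.
Qed.

Lemma idmulA I J K : ssubset (idmul I (idmul J K)) (idmul (idmul I J) K).
Proof.
apply: idmul_ind; [exact: idmul0|exact: idmulD|].
move=> a y Ia; apply: (@idmul_ind J K (fun y => idmul (idmul I J) K (a * y))).
- by rewrite mulr0; apply: idmul0.
- by move=> x z ? ?; rewrite mulrDr; apply: idmulD.
- by move=> b c ? ?; rewrite mulrA; apply: idmul1 => //; apply: idmul1.
Qed.

Lemma idmulA' I J K : ssubset (idmul (idmul I J) K) (idmul I (idmul J K)).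
Proof.
apply: idmul_ind; [exact: idmul0|exact: idmulD|].
move=> y c + Kc; move: y; apply: (@idmul_ind I J (fun y => idmul I (idmul J K) (y * c))).
- by rewrite mul0r; apply: idmul0.
- by move=> x z ? ?; rewrite mulrDl; apply: idmulD.
- by move=> a b ? ?; rewrite -mulrA; apply: idmul1 => //; apply: idmul1.
Qed.

Lemma prodI_ideal (l : seq (R -> Prop)) : forall r x, prodI l x -> prodI l (r * x).
Proof.
elim: l => [//|X l IH] r x /= Hx.
by apply: (idmul_rmul _ Hx) => r' y /IH; apply.
Qed.

Lemma prodI0 (l : seq (R -> Prop)) : prodI l 0.
Proof. by case: l => [//|X l]; apply: idmul0. Qed.

Lemma prodID (l : seq (R -> Prop)) x y : prodI l x -> prodI l y -> prodI l (x + y).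
Proof. by case: l => [//|X l]; apply: idmulD. Qed.

Lemma prodI_prefix (l1 l2 : seq (R -> Prop)) : ssubset (prodI (l1 ++ l2)) (prodI l1).
Proof.
elim: l1 => [//|X l1 IH] /=; exact: idmul_mono.
Qed.

Lemma prodI_suffix (l1 l2 : seq (R -> Prop)) : ssubset (prodI (l1 ++ l2)) (prodI l2).
Proof.
elim: l1 => [//|X l1 IH] /=; apply: idmul_ind; [exact: prodI0|exact: prodID|].
by move=> a b _ /IH Hb; apply: prodI_ideal.
Qed.

Lemma prodI_cat (l1 l2 : seq (R -> Prop)) : ssubset (idmul (prodI l1) (prodI l2)) (prodI (l1 ++ l2)).
Proof.
elim: l1 => [|X l1 IH] /=.
  apply: idmul_ind; [exact: prodI0|exact: prodID|].
  by move=> a b _ Hb; apply: prodI_ideal.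
move=> x /idmulA' Hx; apply: idmul_mono Hx => //.
Qed.

Lemma prodI_cat' (l1 l2 : seq (R -> Prop)) : ssubset (prodI (l1 ++ l2)) (idmul (prodI l1) (prodI l2)).
Proof.
elim: l1 => [|X l1 IH] /= x Hx.
  by rewrite -[x]mul1r; apply: idmul1.
apply: idmulA; apply: idmul_mono Hx => //.
Qed.

Lemma prodI_swap (l1 l2 : seq (R -> Prop)) : ssubset (prodI (l1 ++ l2)) (prodI (l2 ++ l1)).
Proof. by move=> x /prodI_cat' /idmulC /prodI_cat. Qed.

Lemma prodI_mono (T : Type) (f g : T -> R -> Prop) (l : seq T) :
  (forall j, ssubset (f j) (g j)) -> ssubset (prodI (map f l)) (prodI (map g l)).
Proof.
move=> Hfg; elim: l => [//|j l IH] /=; exact: idmul_mono.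
Qed.

Lemma prodI_cons_mono X Y (l l' : seq (R -> Prop)) : ssubset X Y -> ssubset (prodI l) (prodI l') ->
  ssubset (prodI (X :: l)) (prodI (Y :: l')).
Proof. exact: idmul_mono. Qed.

End Ideals.


Section IkSec.
Variables (k : fieldType) (R : comAlgType k).
Variables (sigma : {lrmorphism R -> R}) (sigmainv : R -> R).
Hypotheses (sK : cancel sigma sigmainv) (sK' : cancel sigmainv sigma).
Variables (H J : R -> Prop).

Local Notation sp := (sigpow sigma sigmainv).
Local Notation sg := (simg sigma sigmainv).
Let spA := sigpow_add sK sK'.
Let spK := sigpowK sK sK'.
Let spKN := sigpowKN sK sK'.
Let spM := sigpowM sK sK'.
Let spD := sigpowD sK sK'.
Let sp1 := sigpow1 sK sK'.
Let sp0 := sigpow00 sK sK'.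

Lemma simg_comp a b X : seteq (sg a (sg b X)) (sg (a + b) X).
Proof.
by move=> x; rewrite /simg -spA opprD addrC.
Qed.

Lemma seteq_simg c X Y : seteq X Y -> seteq (sg c X) (sg c Y).
Proof. by move=> HXY x; rewrite /simg. Qed.

Lemma simg_ideal c X : is_ideal X -> is_ideal (sg c X).
Proof.
case=> X0 XD XM; split; rewrite /simg.
- by rewrite sp0.
- by move=> a b ? ?; rewrite spD; apply: XD.
- by move=> r a ?; rewrite spM; apply: XM.
Qed.

Lemma simg_sp c X a : X a -> sg c X (sp c a).
Proof. by rewrite /simg spKN. Qed.

Lemma sigpow_prodI c (L : seq (R -> Prop)) x :
  prodI L x -> prodI (map (sg c) L) (sp c x).
Proof.
elim: L x => [//|X L IH] x /=.
move: x; apply: (@idmul_ind _ X (prodI L) (fun x => idmul (sg c X) (prodI (map (sg c) L)) (sp c x))).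
- by rewrite sp0; apply: idmul0.
- by move=> x y ? ?; rewrite spD; apply: idmulD.
- by move=> a b ? ?; rewrite spM; apply: idmul1; [apply: simg_sp|apply: IH].
Qed.

Lemma sp_map c X (f g : nat -> int) (s : seq nat) b :
  (forall j, c + f j = g j) -> prodI [seq sg (f j) X | j <- s] b ->
  prodI [seq sg (g j) X | j <- s] (sp c b).
Proof.
move=> Hfg /(sigpow_prodI c); rewrite -map_comp; apply: prodI_mono => j x /=.
by move/simg_comp; rewrite Hfg.
Qed.

Lemma iota_shift (T : Type) (F : nat -> T) m n :
  [seq F j | j <- iota m n] = [seq F (m + j)%N | j <- iota 0 n].
Proof. by rewrite -{1}(addn0 m) iotaDl -map_comp. Qed.

Definition PJ N := prodI [seq sg (Posz j) J | j <- iota 0 N].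
Definition PH N := prodI [seq sg (- Posz j.+1) H | j <- iota 0 N].

Lemma IkPos N x : Ik sigma sigmainv H J (Posz N) x <-> PJ N x.
Proof. by []. Qed.
Lemma IkNeg N x : Ik sigma sigmainv H J (Negz N) x <-> PH N.+1 x.
Proof. by []. Qed.

Lemma PJ_split a b x : PJ (a + b) x ->
  prodI ([seq sg (Posz j) J | j <- iota 0 a] ++
         [seq sg (Posz (a + j)) J | j <- iota 0 b]) x.
Proof. by rewrite /PJ iotaD add0n map_cat (@iota_shift _ _ a). Qed.

Lemma PJ_split' a b x :
  prodI ([seq sg (Posz j) J | j <- iota 0 a] ++
         [seq sg (Posz (a + j)) J | j <- iota 0 b]) x -> PJ (a + b) x.
Proof. by rewrite /PJ iotaD add0n map_cat (@iota_shift _ _ a). Qed.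

Lemma PH_split a b x : PH (a + b) x ->
  prodI ([seq sg (- Posz j.+1) H | j <- iota 0 a] ++
         [seq sg (- Posz (a + j).+1) H | j <- iota 0 b]) x.
Proof. by rewrite /PH iotaD add0n map_cat (@iota_shift _ _ a). Qed.

Lemma PH_split' a b x :
  prodI ([seq sg (- Posz j.+1) H | j <- iota 0 a] ++
         [seq sg (- Posz (a + j).+1) H | j <- iota 0 b]) x -> PH (a + b) x.
Proof. by rewrite /PH iotaD add0n map_cat (@iota_shift _ _ a). Qed.

Lemma PJ_ideal N r x : PJ N x -> PJ N (r * x).
Proof. exact: prodI_ideal. Qed.
Lemma PH_ideal N r x : PH N x -> PH N (r * x).
Proof. exact: prodI_ideal. Qed.

Lemma IkM (a b : R) (z w : int) : Ik sigma sigmainv H J z a ->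
  Ik sigma sigmainv H J w b -> Ik sigma sigmainv H J (z + w) (a * sp z b).
Proof.
case: z => p; case: w => q.
-
  move=> /IkPos Ha /IkPos Hb; rewrite -PoszD; apply/IkPos; apply: PJ_split'.
  apply: prodI_cat; apply: idmul1 => //.
  by apply: (sp_map (f := fun j => Posz j)) Hb => j; rewrite PoszD.
-
  move=> /IkPos Ha /IkNeg Hb.
  case: (leqP q.+1 p) => hpq.
    have -> : (Posz p + Negz q = Posz (p - q.+1))%R by rewrite NegzE; lia.
    apply/IkPos; rewrite mulrC; apply: PJ_ideal.
    have Ha' : PJ ((p - q.+1) + q.+1) a by rewrite subnK.
    by move/PJ_split: Ha'; apply: prodI_prefix.
  have -> : (Posz p + Negz q = Negz (q - p))%R by rewrite NegzE; lia.
  apply/IkNeg; apply: PH_ideal.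
  have E : q.+1 = (p + (q - p).+1)%N by lia.
  have Hb' : PH (p + (q-p).+1) b by rewrite -E.
  move/PH_split/(sigpow_prodI p): Hb'; rewrite map_cat => /prodI_suffix.
  rewrite -map_comp; apply: prodI_mono => j x /= /simg_comp.
  by have -> : (Posz p + - Posz (p + j).+1 = - Posz j.+1)%R by lia.
-
  move=> /IkNeg Ha /IkPos Hb.
  case: (leqP p.+1 q) => hpq.
    have -> : (Negz p + Posz q = Posz (q - p.+1))%R by rewrite NegzE; lia.
    apply/IkPos; apply: PJ_ideal.
    have E : q = (p.+1 + (q - p.+1))%N by lia.
    have Hb' : PJ (p.+1 + (q - p.+1)) b by rewrite -E.
    move/PJ_split/(sigpow_prodI (Negz p)): Hb'; rewrite map_cat => /prodI_suffix.
    rewrite -map_comp; apply: prodI_mono => j x /= /simg_comp.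
    by have -> : (Negz p + Posz (p.+1 + j) = Posz j)%R by rewrite NegzE; lia.
  have -> : (Negz p + Posz q = Negz (p - q))%R by rewrite NegzE; lia.
  apply/IkNeg; rewrite mulrC; apply: PH_ideal.
  have Ha' : PH ((p - q).+1 + q) a by have -> : ((p - q).+1 + q = p.+1)%N by lia.
  by move/PH_split: Ha'; apply: prodI_prefix.
-
  move=> /IkNeg Ha /IkNeg Hb.
  have -> : (Negz p + Negz q = Negz (p + q).+1)%R by rewrite !NegzE; lia.
  apply/IkNeg; have -> : ((p + q).+2 = p.+1 + q.+1)%N by lia.
  apply: PH_split'; apply: prodI_cat; apply: idmul1 => //.
  move/(sigpow_prodI (Negz p)): Hb; rewrite -map_comp; apply: prodI_mono => j x /= /simg_comp.
  by have -> : (Negz p + - Posz j.+1 = - Posz (p.+1 + j).+1)%R by rewrite NegzE; lia.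
Qed.

End IkSec.


Section Stab.
Variables (k : fieldType) (R : comAlgType k).
Variables (sigma : {lrmorphism R -> R}) (sigmainv : R -> R).
Hypotheses (sK : cancel sigma sigmainv) (sK' : cancel sigmainv sigma).
Variables (H J : R -> Prop).
Variables (n : nat) (n_gt0 : (0 < n)%N) (sigma_n : forall x, iter n sigma x = x).

Local Notation sp := (sigpow sigma sigmainv).
Local Notation sg := (simg sigma sigmainv).
Let spA := sigpow_add sK sK'.
Let sgc := simg_comp sK sK'.

Lemma sp_mul (z : int) x : sp (z * n) x = x.
Proof.
move: x; elim/int_ind3: z => [x|z IH x|z IH x]; first by rewrite mul0r.
  by rewrite mulrDl mul1r spA IH; apply: sigma_n.
have hn y : sp (Posz n) y = y := sigma_n y.
by rewrite mulrBl mul1r spA IH -[RHS](sigpowK sK sK' n x) hn.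
Qed.

Lemma sp_per (a q : int) x : sp (a + q * n) x = sp a x.
Proof. by rewrite spA sp_mul. Qed.

Lemma simg_per (a q : int) X : seteq (sg (a + q * n) X) (sg a X).
Proof. by move=> x; rewrite /simg opprD -mulNr sp_per. Qed.

Lemma sp_mod (z : int) x : sp z x = sp (Posz `|(z %% n)%Z|%N) x.
Proof.
rewrite gez0_abs ?modz_ge0 -?lt0n //.
by rewrite {1}(divz_eq z n) addrC sp_per.
Qed.

Lemma prodI_cat_mono (L1 L2 L1' L2' : seq (R -> Prop)) :
  ssubset (prodI L1) (prodI L1') -> ssubset (prodI L2) (prodI L2') ->
  ssubset (prodI (L1 ++ L2)) (prodI (L1' ++ L2')).
Proof.
move=> h1 h2 x /prodI_cat' hx; apply: prodI_cat; exact: idmul_mono hx.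
Qed.

Lemma Ik_stable1 (z : int) x : Ik sigma sigmainv H J (z * n) x ->
  Ik sigma sigmainv H J (z * n) (sp 1 x).
Proof.
case E: (z * n) => [N|M].
  case: N E => [//|N] E /IkPos Hx; apply/IkPos.
  have Hx' : prodI ([seq sg (Posz j) J | j <- iota 0 N] ++ [:: sg (Posz N) J]) x.
    by move: Hx; rewrite /PJ -addn1 iotaD add0n map_cat.
  move/(sigpow_prodI sK sK' 1): Hx'; rewrite map_cat => /prodI_swap.
  rewrite /PJ -[iota 0 N.+1]/(0%N :: iota 1 N) [map _ (_ :: iota 1 N)]/= (@iota_shift _ _ 1) -map_comp.
  apply: prodI_cons_mono.
    move=> y /sgc Hy.
    have := (simg_per (1 + Posz N) (- z) J y); rewrite mulNr.
    have -> : (1 + Posz N - z * n = 0)%R by move: E; nia.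
    by move=> h; apply/h.
  apply: prodI_mono => j y /sgc; rewrite /simg; congr (J (sp _ y)); lia.
move=> /IkNeg Hx; apply/IkNeg.
have Hx' : prodI (sg (- Posz 1) H :: [seq sg (- Posz (1 + j).+1) H | j <- iota 0 M]) x.
  by move: Hx; rewrite /PH -[iota 0 M.+1]/(0%N :: iota 1 M) [map _ (_ :: iota 1 M)]/= (@iota_shift _ _ 1).
move/(sigpow_prodI sK sK' 1): Hx'; rewrite -cat1s map_cat => /prodI_swap.
rewrite /PH -(addn1 M) iotaD add0n map_cat -map_comp.
apply: prodI_cat_mono.
  by apply: prodI_mono => j y /sgc; rewrite /simg; congr (H (sp _ y)); lia.
apply: prodI_cons_mono => // y /sgc Hy.
have := (simg_per (- Posz (0 + M).+1) (- z) H y); rewrite mulNr.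
have -> : (- Posz (0 + M).+1 - z * n = 0)%R by move: E; rewrite NegzE; nia.
rewrite subrr in Hy; rewrite add0n => h; by apply/h.
Qed.

Lemma Ik_stable (z i : int) x : Ik sigma sigmainv H J (z * n) x ->
  Ik sigma sigmainv H J (z * n) (sp i x).
Proof.
move=> h; rewrite sp_mod; elim: `|_|%N => [//|j IH].
by have := Ik_stable1 IH.
Qed.

Lemma simg_mod (a b : int) X : (a %% n = b %% n)%Z -> seteq (sg a X) (sg b X).
Proof.
move=> hab x; rewrite {1}(divz_eq a n) {1}(divz_eq b n) hab.
have := simg_per ((b %% n)%Z) (a %/ n)%Z X x; rewrite addrC => ->.
by have := simg_per ((b %% n)%Z) (b %/ n)%Z X x; rewrite addrC => ->.
Qed.
End Stab.


Section Mod.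
Variables (k : fieldType) (R : comAlgType k).
Variables (sigma : {lrmorphism R -> R}) (sigmainv : R -> R).
Hypotheses (sK : cancel sigma sigmainv) (sK' : cancel sigmainv sigma).
Variables (H J : R -> Prop).
Variables (M : zmodType) (act : int -> R -> M -> M).
Hypothesis (Mmod : is_BR_module sigma sigmainv H J act).

Local Notation sp := (sigpow sigma sigmainv).
Local Notation sg := (simg sigma sigmainv).
Local Notation Ik := (Ik sigma sigmainv H J).
Let spA := sigpow_add sK sK'.
Let spK := sigpowK sK sK'.
Let spKN := sigpowKN sK sK'.
Let sgc := simg_comp sK sK'.

Lemma Ik0 a : Ik 0 a. Proof. by []. Qed.

Lemma act_addA z a b v : Ik z a -> Ik z b -> act z (a + b) v = act z a v + act z b v.
Proof. by case: Mmod => h _ _ _; apply: h. Qed.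

Lemma act_addV z a v w : Ik z a -> act z a (v + w) = act z a v + act z a w.
Proof. by case: Mmod => _ h _ _; apply: h. Qed.

Lemma act1 v : act 0 1 v = v.
Proof. by case: Mmod => _ _ h _; apply: h. Qed.

Lemma act_comp z l a b v : Ik z a -> Ik l b ->
  act z a (act l b v) = act (z + l) (a * sp z b) v.
Proof. by case: Mmod => _ _ _ h; apply: h. Qed.

Lemma act00 a b v : act 0 a (act 0 b v) = act 0 (a * b) v.
Proof. by rewrite act_comp // add0r. Qed.

Lemma act_v0 z a : Ik z a -> act z a 0 = 0.
Proof.
move=> h; have e := act_addV 0 0 h; rewrite addr0 in e.
by apply: (addrI (act z a 0)); rewrite addr0 -e.
Qed.

Lemma act_a0 z v : act z 0 v = 0.
Proof.
have h0 : Ik z 0 by case: z => [p|p]; apply: prodI0.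
have e := act_addA v h0 h0; rewrite addr0 in e.
by apply: (addrI (act z 0 v)); rewrite addr0 -e.
Qed.

Lemma act_oppV z a v : Ik z a -> act z a (- v) = - act z a v.
Proof.
move=> h; apply/eqP; rewrite -subr_eq0 opprK -act_addV // addNr.
by rewrite act_v0.
Qed.

Lemma act_sum z a (T : Type) (s : seq T) (F : T -> M) : Ik z a ->
  act z a (\sum_(p <- s) F p) = \sum_(p <- s) act z a (F p).
Proof.
move=> h; elim: s => [|p s IH]; first by rewrite !big_nil act_v0.
by rewrite !big_cons act_addV // IH.
Qed.

Lemma wspace_ext X Y v : seteq X Y -> wspace act X v <-> wspace act Y v.
Proof. by move=> hXY; split => hv a /hXY; apply: hv. Qed.

Lemma wspace0 X : wspace act X 0.
Proof. by move=> a _; apply: act_v0. Qed.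

Lemma wspaceD X v w : wspace act X v -> wspace act X w -> wspace act X (v + w).
Proof. by move=> hv hw a ha; rewrite act_addV // hv // hw // addr0. Qed.

Lemma wspaceN X v : wspace act X v -> wspace act X (- v).
Proof. by move=> hv a ha; rewrite act_oppV // hv // oppr0. Qed.

Lemma wspace_sum X (T : Type) (s : seq T) (F : T -> M) :
  (forall p, List.In p s -> wspace act X (F p)) -> wspace act X (\sum_(p <- s) F p).
Proof.
elim: s => [|p s IH] h; first by rewrite big_nil; apply: wspace0.
rewrite big_cons; apply: wspaceD; first by apply: h; left.
by apply: IH => q hq; apply: h; right.
Qed.

Lemma wspace_act0 X a v : wspace act X v -> wspace act X (act 0 a v).
Proof. by move=> hv b hb; rewrite act00 mulrC -act00 hv // act_v0. Qed.

Lemma wspace_act X z a v : wspace act X v -> Ik z a -> wspace act (sg z X) (act z a v).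
Proof.
move=> hv ha r hr; rewrite act_comp // add0r sigpow0.
have e : act z a (act 0 (sp (- z) r) v) = act z (a * sp z (sp (- z) r)) v.
  by rewrite act_comp // addr0.
by rewrite spK mulrC in e; rewrite -e hv // act_v0.
Qed.

Lemma good_max (m : R -> Prop) x v : is_maximal m -> ~ m x ->
  wspace act m v -> act 0 x v = 0 -> v = 0.
Proof.
case=> [[m0 mD mM] m1 mmax] hx hv hxv.
pose I y := exists r s, m s /\ y = s + r * x.
have HI : is_ideal I.
  split.
  + by exists 0, 0; split => //; rewrite mul0r addr0.
  + move=> a b [r [s [ms ->]]] [r' [s' [ms' ->]]].
    by exists (r + r'), (s + s'); split; [apply: mD|ring].
  + by move=> r' a [r [s [ms ->]]]; exists (r' * r), (r' * s); split; [apply: mM|ring].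
case: (mmax I HI).
- by move=> s ms; exists 0, s; split => //; rewrite mul0r addr0.
- by move=> /(_ x) h; exfalso; apply: hx; apply: h; exists 1, 0; split => //; rewrite mul1r add0r.
move=> [r [s [ms e]]].
by rewrite -(act1 v) e act_addA // hv // add0r -act00 hxv act_v0.
Qed.

End Mod.


Section Main.
Variables (k : fieldType) (R : comAlgType k).
Variables (sigma : {lrmorphism R -> R}) (sigmainv : R -> R).
Hypotheses (sK : cancel sigma sigmainv) (sK' : cancel sigmainv sigma).
Variables (H J : R -> Prop).
Hypotheses (HH : is_ideal H) (HJ : is_ideal J).
Variables (n : nat).
Hypotheses (n_gt0 : (0 < n)%N) (sigma_n : forall x, iter n sigma x = x).
Variables (m0 : R -> Prop).
Hypothesis (m0_max : is_maximal m0).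
Hypothesis (orbit_size : forall i j : nat, (i < n)%N -> (j < n)%N ->
      seteq (simg sigma sigmainv (Posz i) m0) (simg sigma sigmainv (Posz j) m0) ->
      i = j).
Hypothesis (no_breaks : forall z : int,
      ~ ssubset (idmul H J) (simg sigma sigmainv 1 (simg sigma sigmainv z m0))).
Variables (M : zmodType) (act : int -> R -> M -> M).
Hypotheses (Mmod : is_BR_module sigma sigmainv H J act)
  (Msimple : is_simple_B_module sigma sigmainv H J act)
  (Mweight : is_weight_module act)
  (Msupp : forall m, is_maximal m -> (exists v, wspace act m v /\ v <> 0) ->
      exists z : int, seteq m (simg sigma sigmainv z m0)).

Local Notation sp := (sigpow sigma sigmainv).
Local Notation sg := (simg sigma sigmainv).
Local Notation Ik := (Ik sigma sigmainv H J).
Local Notation W X := (wspace act X).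
Let spA := sigpow_add sK sK'.
Let spK := sigpowK sK sK'.
Let spKN := sigpowKN sK sK'.
Let spM := sigpowM sK sK'.
Let sp1 := sigpow1 sK sK'.
Let sgc := simg_comp sK sK'.
Let gmax := good_max Mmod.
Let wact := wspace_act sK sK' Mmod.
Let acomp := act_comp Mmod.
Let a00 := act00 Mmod.
Let ikm := IkM sK sK' (H:=H) (J:=J).
Let ikst := Ik_stable sK sK' (H:=H) (J:=J) n_gt0 sigma_n.
Let smod := simg_mod sK sK' sigma_n.
Let spmod := sp_mod sK sK' n_gt0 sigma_n.
Let sper := simg_per sK sK' sigma_n.
Let asum := act_sum Mmod.
Let wsum := wspace_sum Mmod.
Let w0 := wspace0 Mmod.
Let wD := wspaceD Mmod.
Let wN := wspaceN Mmod.
Let wact0 := wspace_act0 Mmod.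
Let aV0 := act_v0 Mmod.
Let aoppV := act_oppV Mmod.
Let a1 := act1 Mmod.
Let aaddV := act_addV Mmod.

Lemma simg_max c X : is_maximal X -> is_maximal (sg c X).
Proof.
case=> hX h1 hmax; split; first exact: (simg_ideal sK sK').
  by rewrite /simg sp1.
move=> I HI hsub.
case: (hmax (sg (- c) I) (simg_ideal sK sK' (- c) HI)).
- by move=> x hx; rewrite /simg opprK; apply: hsub; rewrite /simg spKN.
- by move=> h; left => y hy; rewrite /simg; apply: h; rewrite /simg opprK spK.
- by rewrite /simg sp1 => h; right.
Qed.

Lemma nb_elem (c : int) : exists y, (H y /\ J y) /\ ~ sg c m0 y.
Proof.
have := no_breaks (z := c - 1).
move=> /not_all_ex_not [x hx]; exists x.
have [hx1 hx2] := imply_to_and _ _ hx; split.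
  case: HH => H0 HD HM; case: HJ => J0 JD JM.
  move: x hx1 {hx hx2}; apply: idmul_ind => //.
  - by move=> x y [? ?] [? ?]; split; [apply: HD|apply: JD].
  - by move=> a b ha hb; split; [rewrite mulrC|]; apply: HM || apply: JM.
move=> h; apply: hx2; apply/sgc; by rewrite addrC subrK.
Qed.


Lemma prodI_witness (P : R -> Prop) (L : seq (R -> Prop)) : P 1 ->
  (forall x y, P x -> P y -> P (x * y)) ->
  (forall X, List.In X L -> exists x, X x /\ P x) -> exists x, prodI L x /\ P x.
Proof.
move=> P1 PM; elim: L => [|X L IH] hL; first by exists 1.
have [x [hx px]] := hL X (or_introl erefl).
have [y [hy py]] := IH (fun Y hY => hL Y (or_intror hY)).
by exists (x * y); split; [apply: idmul1|apply: PM].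
Qed.

Lemma In_map (A B : Type) (f : A -> B) (l : seq A) y :
  List.In y (map f l) -> exists x, f x = y /\ List.In x l.
Proof.
elim: l => [//|x l IH] /= [<-|/IH [x' [? ?]]]; first by exists x; split; [|left].
by exists x'; split; [|right].
Qed.

Definition Good z' x := forall v, W (sg z' m0) v -> act 0 x v = 0 -> v = 0.

Lemma Good1 z' : Good z' 1.
Proof. by move=> v _; rewrite a1. Qed.

Lemma GoodM z' x y : Good z' x -> Good z' y -> Good z' (x * y).
Proof.
move=> gx gy v hv; rewrite -a00 => /gx h; apply: gy => //; apply: h.
exact: wact0.
Qed.

Lemma factor_witness z' (X : R -> Prop) :
  (forall c : int, exists y, X y /\ ~ sg c m0 y) ->
  forall j d : int, exists x, sg j X x /\ Good z' (sp d x).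
Proof.
move=> hX j d; have [y [hy hny]] := hX (z' - d - j).
exists (sp j y); split; first by rewrite /simg spKN.
move=> v hv hav; apply: (gmax (simg_max z' m0_max) _ hv hav).
rewrite /simg -!spA => h; apply: hny; rewrite /simg.
by have -> : (- (z' - d - j) = - z' + d + j)%R by lia.
Qed.

Lemma Ik_witness z' (z d : int) : exists a, Ik z a /\ Good z' (sp d a).
Proof.
have hPM x y : Good z' (sp d x) -> Good z' (sp d y) -> Good z' (sp d (x * y)).
  by rewrite spM; apply: GoodM.
have hP1 : Good z' (sp d 1) by rewrite sp1; apply: Good1.
have hJ c : exists y, J y /\ ~ sg c m0 y.
  by have [y [[_ ?] ?]] := nb_elem c; exists y.
have hH c : exists y, H y /\ ~ sg c m0 y.
  by have [y [[? _] ?]] := nb_elem c; exists y.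
case: z => [N|N].
  change (exists a, prodI [seq sg (Posz j) J | j <- iota 0 N] a /\ Good z' (sp d a)).
  apply: prodI_witness; [exact: hP1|exact: hPM|] => X hX; have [j [<- _]] := In_map hX.
  exact: (factor_witness z' hJ).
change (exists a, prodI [seq sg (- Posz j.+1) H | j <- iota 0 N.+1] a /\ Good z' (sp d a)).
apply: prodI_witness; [exact: hP1|exact: hPM|] => X hX; have [j [<- _]] := In_map hX.
exact: (factor_witness z' hH).
Qed.

Lemma nonvanish z' v : W (sg z' m0) v -> v <> 0 ->
  forall z : int, exists a, Ik z a /\ act z a v <> 0.
Proof.
move=> hv hv0 z.
have [a [ha ga]] := Ik_witness z' z (- z).
have [b [hb gb]] := Ik_witness z' (- z) 0.
exists a; split => // hav; apply: hv0.
have e := acomp v hb ha; rewrite hav aV0 // addNr -a00 in e.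
apply: (ga v hv); apply: gb; first exact: wact0.
by rewrite sigpow0 -e.
Qed.


Lemma foldr_nz (s : seq ((R -> Prop) * M)) :
  foldr (fun p acc => p.2 + acc) 0 s <> 0 -> exists p, List.In p s /\ p.2 <> 0.
Proof.
elim: s => [//|q s IH] /= h.
case: (eqVneq q.2 0) => hq.
  by rewrite hq add0r in h; have [p [? ?]] := IH h; exists p; split => //; right.
by exists q; split => //; [left|apply/eqP].
Qed.

Lemma W_comp (c z : int) v : W (sg c (sg z m0)) v -> W (sg (c + z) m0) v.
Proof. by move/(wspace_ext act v (sgc c z m0)). Qed.

Lemma W_comp' (c z : int) v : W (sg (c + z) m0) v -> W (sg c (sg z m0)) v.
Proof. by move/(wspace_ext act v (sgc c z m0)). Qed.

Lemma exists_nz z : exists v, W (sg z m0) v /\ v <> 0.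
Proof.
case: Msimple => [[v0 hv0] _].
case: Mweight => [hdec _ _].
have [s [hs ev]] := hdec v0.
have [p [hp hp2]] : exists p, List.In p s /\ p.2 <> 0.
  by apply: foldr_nz; rewrite -ev.
have [hmax hw] := hs p hp.
have [z' hz'] := Msupp hmax (ex_intro _ p.2 (conj hw hp2)).
have hw' : W (sg z' m0) p.2 by apply/(wspace_ext act _ hz').
have [a [ha hav]] := nonvanish hw' hp2 (z - z').
exists (act (z - z') a p.2); split => //.
have := W_comp (wact hw' ha); by rewrite subrK.
Qed.


Lemma In_filter (T : Type) (P : pred T) (s : seq T) x :
  List.In x (filter P s) -> List.In x s /\ P x.
Proof.
elim: s => [//|y s IH] /=; case: ifP => Py /=.
  by move=> [<-|/IH [? ?]]; split => //; [left|right].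
by move/IH => [? ?]; split => //; right.
Qed.

Lemma foldr_sum (s : seq ((R -> Prop) * M)) :
  foldr (fun p acc => p.2 + acc) 0 s = \sum_(p <- s) p.2.
Proof. by elim: s => [|p s IH] /=; rewrite ?big_nil ?big_cons ?IH. Qed.

Lemma List_nth (T : Type) (s : seq T) i d : List.nth i s d = nth d s i.
Proof. by elim: s i => [|x s IH] [|i] //=. Qed.

Lemma sum_pick (x : M) r : (r < n)%N -> \sum_(j <- iota 0 n | r == j) x = x.
Proof.
move=> hr; rewrite big_const_seq.
have -> : count (fun j => r == j) (iota 0 n) = 1%N.
  transitivity (count (pred1 r) (iota 0 n)); first by apply: eq_count => j /=; rewrite eq_sym.
  by rewrite count_uniq_mem ?iota_uniq // mem_iota hr.
by rewrite /= addr0.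
Qed.

Lemma orbit_distinct (z : int) (i j : nat) : (i < n)%N -> (j < n)%N -> i <> j ->
  ~ seteq (sg (z + Posz i) m0) (sg (z + Posz j) m0).
Proof.
move=> hi hj hij h; apply: hij; apply: orbit_size => // x.
have e : forall c : nat, sg c m0 x <-> sg (- z) (sg (z + Posz c) m0) x.
  by move=> c; rewrite (sgc (- z) (z + Posz c) m0 x) addKr.
by rewrite e (seteq_simg sigma sigmainv (- z) h x) -e.
Qed.

Definition res (p : (int * R) * M) : nat := `|(p.1.1 %% n)%Z|%N.

Lemma res_eq p : Posz (res p) = (p.1.1 %% n)%Z.
Proof. by rewrite /res gez0_abs // modz_ge0 // -lt0n. Qed.

Lemma res_lt p : (res p < n)%N.
Proof.
have h : ((p.1.1 %% n)%Z < n)%R by apply: ltz_pmod; rewrite ltz_nat.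
by rewrite -res_eq ltz_nat in h.
Qed.


Lemma Ssum (S : M -> Prop) (T : Type) (s : seq T) (F : T -> M) :
  S 0 -> (forall v w, S v -> S w -> S (v + w)) ->
  (forall p, List.In p s -> S (F p)) -> S (\sum_(p <- s) F p).
Proof.
move=> S0 SD; elim: s => [|p s IH] h; first by rewrite big_nil.
rewrite big_cons; apply: SD; first by apply: h; left.
by apply: IH => q hq; apply: h; right.
Qed.

Lemma zmod_lem (a b : M) : (a - (a + b)) + b = 0.
Proof. by rewrite opprD addrA subrr add0r addNr. Qed.

Lemma proj_lemma z (S : M -> Prop) (L : seq ((int * R) * M)) w :
  S 0 -> (forall v w, S v -> S w -> S (v + w)) ->
  (forall (kk : int) a v, Ik (kk * n) a -> S v -> S (act (kk * n) a v)) ->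
  (forall p, List.In p L -> Ik p.1.1 p.1.2 /\ W (sg z m0) p.2 /\ S p.2) ->
  W (sg z m0) w -> w = \sum_(p <- L) act p.1.1 p.1.2 p.2 -> S w.
Proof.
move=> S0 SD SL hL hw ew.
pose F (p : (int * R) * M) := act p.1.1 p.1.2 p.2.
pose y r := \sum_(p <- L | res p == r) F p.
have hy r : W (sg (z + Posz r) m0) (y r).
  rewrite /y -big_filter; apply: wsum => p hp'; have [hp /eqP hr] := In_filter hp'.
  have [ha [hs _]] := hL p hp.
  have E : ((p.1.1 + z) %% n = (z + Posz (res p)) %% n)%Z.
    by rewrite res_eq modzDmr addrC.
  rewrite -hr; exact: (proj1 (wspace_ext act _ (smod m0 E)) (W_comp (wact hs ha))).
have ew' : w = \sum_(r <- iota 0 n) y r.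
  rewrite ew; transitivity (\sum_(p <- L) \sum_(r <- iota 0 n | res p == r) F p).
    by apply: eq_bigr => p _; rewrite sum_pick ?res_lt.
  rewrite (exchange_big_dep xpredT) //=.
have [n' En] : exists n', n = n'.+1 by exists n.-1; rewrite prednK.
pose f r := (sg (z + Posz r) m0, if r == 0%N then y 0%N - w else y r).
case: Mweight => _ hdir _.
have h1 : forall p, List.In p [seq f r | r <- iota 0 n] ->
    is_maximal p.1 /\ wspace act p.1 p.2.
  move=> p hp; have [r [<- _]] := In_map hp; split; first exact: simg_max.
  rewrite /f /=; case: eqP => [->|_]; last exact: hy.
  apply: wD; first exact: hy.
  by apply: wN; rewrite addr0.
have h2 : forall i j, (i < size [seq f r | r <- iota 0 n])%N ->
    (j < size [seq f r | r <- iota 0 n])%N -> i <> j ->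
    ~ seteq (List.nth i [seq f r | r <- iota 0 n] (@fullI R, 0)).1
            (List.nth j [seq f r | r <- iota 0 n] (@fullI R, 0)).1.
  move=> i j; rewrite size_map size_iota => hi hj hij.
  rewrite !List_nth (nth_map 0%N) ?size_iota // (nth_map 0%N) ?size_iota //.
  by rewrite !nth_iota //=; apply: orbit_distinct.
have h3 : foldr (fun p acc => p.2 + acc) 0 [seq f r | r <- iota 0 n] = 0.
  rewrite foldr_sum big_map /f /= En -[iota 0 n'.+1]/(0%N :: iota 1 n') big_cons /=.
  rewrite (eq_big_seq y); last first.
    by move=> r; rewrite mem_iota => /andP [hr _]; case: eqP => // E; rewrite E in hr.
  by rewrite ew' En -[iota 0 n'.+1]/(0%N :: iota 1 n') big_cons zmod_lem.
have h0 : List.In (f 0%N) [seq f r | r <- iota 0 n].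
  by rewrite En -[iota 0 n'.+1]/(0%N :: iota 1 n'); left.
have := hdir _ h1 h2 h3 _ h0; rewrite /f /= => /subr0_eq <-.
rewrite /y -big_filter; apply: Ssum => // p hp'; have [hp /eqP hr] := In_filter hp'.
have [ha [_ hs]] := hL p hp.
have Ep : p.1.1 = (p.1.1 %/ n)%Z * n.
  by rewrite {1}(divz_eq p.1.1 n) -res_eq hr addr0.
rewrite /F Ep; apply: SL => //; by rewrite -Ep.
Qed.


Lemma W_Lam z (kk : int) a u : W (sg z m0) u -> Ik (kk * n) a ->
  W (sg z m0) (act (kk * n) a u).
Proof.
move=> hu ha; have := W_comp (wact hu ha); rewrite addrC => h.
exact: (proj1 (wspace_ext act _ (sper z kk m0)) h).
Qed.

Lemma twist_eq (kk j : int) a c v : Ik (kk * n) a -> Ik j c ->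
  act j c (act (kk * n) (sp (- j) a) v) = act (kk * n) a (act j c v).
Proof.
move=> ha hc; rewrite acomp //; last exact: ikst.
rewrite acomp // spK (sp_mul sK sK' sigma_n); congr (act _ _ v); [exact: addrC|exact: mulrC].
Qed.

Lemma simple_part z : is_simple_Lambda_module sigma sigmainv H J n act (W (sg z m0)).
Proof.
split; first by have [v [? ?]] := exists_nz z; exists v.
move=> S hSW S0 SD SN SL.
case: (classic (forall v, S v -> v = 0)) => [h|h]; [by left|right].
have [v0 [hv0 hv0nz]] : exists v0, S v0 /\ v0 <> 0.
  apply: NNPP => hn; apply: h => v hv; apply: NNPP => hv'; apply: hn; by exists v.
pose T x := exists L : seq ((int * R) * M),
  (forall p, List.In p L -> Ik p.1.1 p.1.2 /\ S p.2) /\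
  x = \sum_(p <- L) act p.1.1 p.1.2 p.2.
have T0 : T 0 by exists [::]; split => //; rewrite big_nil.
have TD x y : T x -> T y -> T (x + y).
  move=> [L1 [h1 ->]] [L2 [h2 ->]]; exists (L1 ++ L2); split; last by rewrite big_cat.
  by move=> p hp; case: (List.in_app_or _ _ _ hp) => [/h1|/h2].
have T1 kk a s : Ik kk a -> S s -> T (act kk a s).
  move=> ha hs; exists [:: (kk, a, s)]; split; last by rewrite big_cons big_nil addr0.
  by move=> p [<-|[]].
have TN x : T x -> T (- x).
  move=> [L [hL ->]]; elim: L hL => [|p L IH] hL; first by rewrite big_nil oppr0.
  rewrite big_cons opprD; apply: TD; last by apply: IH => q hq; apply: hL; right.
  have [ha hs] := hL p (or_introl erefl); rewrite -aoppV //; exact: T1 ha (SN _ hs).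
have TA l b x : Ik l b -> T x -> T (act l b x).
  move=> hb [L [hL ->]]; elim: L hL => [|p L IH] hL; first by rewrite big_nil aV0.
  rewrite big_cons aaddV //; apply: TD; last by apply: IH => q hq; apply: hL; right.
  have [ha hs] := hL p (or_introl erefl); rewrite acomp //; apply: T1 hs; exact: ikm.
have Tall : forall x, T x.
  case: Msimple => _ /(_ T T0 TD TN TA) [h0|//].
  by exfalso; apply: hv0nz; apply: h0; rewrite -(a1 v0); exact: T1.
move=> w hw; have [L [hL ew]] := Tall w.
apply: (proj_lemma S0 SD SL _ hw ew) => p hp.
by have [ha hs] := hL p hp; split => //; split => //; apply: hSW.
Qed.


Lemma simple_ext (W1 W2 : M -> Prop) : (forall v, W1 v <-> W2 v) ->
  is_simple_Lambda_module sigma sigmainv H J n act W1 ->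
  is_simple_Lambda_module sigma sigmainv H J n act W2.
Proof.
move=> hW [[v [hv hnz]] h]; split; first by exists v; split => //; apply/hW.
move=> S hS S0 SD SN SL.
have hS' : forall v, S v -> W1 v by move=> u /hS /hW.
case: (h S hS' S0 SD SN SL) => [l|r]; [by left|right].
by move=> u /hW; apply: r.
Qed.

Lemma twisted_part z (i : int) :
  twisted_iso sigma sigmainv H J n act i (W (sg z m0)) (W (sg i (sg z m0))).
Proof.
have [v1 [hv1 hv1nz]] := exists_nz z.
have [c [hc hcv]] := nonvanish hv1 hv1nz i.
have hsimp' : is_simple_Lambda_module sigma sigmainv H J n act (W (sg i (sg z m0))).
  apply: (simple_ext _ (simple_part (i + z))) => v.
  by split; [apply: W_comp'|apply: W_comp].
exists (act i c); split.
- by move=> v hv; apply: wact.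
- by move=> v w _ _; apply: aaddV.
- move=> v w hv hw e.
  pose K u := W (sg z m0) u /\ act i c u = 0.
  have k1 : forall u, K u -> W (sg z m0) u by move=> u [].
  have k2 : K 0 by split; [apply: w0|apply: aV0].
  have k3 : forall u u', K u -> K u' -> K (u + u').
    move=> u u' [? e1] [? e2]; split; first exact: wD.
    by rewrite aaddV // e1 e2 addr0.
  have k4 : forall u, K u -> K (- u).
    move=> u [? e1]; split; first exact: wN.
    by rewrite aoppV // e1 oppr0.
  have k5 : forall (kk : int) a u, Ik (kk * n) a -> K u -> K (act (kk * n) a u).
    move=> kk a u ha [hu e1]; split; first exact: W_Lam.
    have ha' := ikst i ha.
    by rewrite -[a](spKN i) twist_eq // e1 aV0.
  case: ((simple_part z).2 K k1 k2 k3 k4 k5) => [h0|h].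
    apply/eqP; rewrite -subr_eq0; apply/eqP; apply: h0; split.
      by apply: wD => //; apply: wN.
    by rewrite aaddV // aoppV // e subrr.
  by exfalso; apply: hcv; have [_ ->] := h v1 hv1.
- move=> w' hw'.
  pose Im u := exists v, W (sg z m0) v /\ act i c v = u.
  have i1 : forall u, Im u -> W (sg i (sg z m0)) u.
    by move=> u [v [hv <-]]; apply: wact.
  have i2 : Im 0 by exists 0; split; [apply: w0|apply: aV0].
  have i3 : forall u u', Im u -> Im u' -> Im (u + u').
    move=> u u' [v [hv <-]] [v' [hv' <-]]; exists (v + v'); split; first exact: wD.
    by rewrite aaddV.
  have i4 : forall u, Im u -> Im (- u).
    move=> u [v [hv <-]]; exists (- v); split; first exact: wN.
    by rewrite aoppV.
  have i5 : forall (kk : int) a u, Ik (kk * n) a -> Im u -> Im (act (kk * n) a u).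
    move=> kk a u ha [v [hv <-]]; exists (act (kk * n) (sp (- i) a) v); split.
      by apply: W_Lam => //; apply: ikst.
    exact: twist_eq.
  case: (hsimp'.2 Im i1 i2 i3 i4 i5) => [h|h]; last exact: h.
  by exfalso; apply: hcv; apply: h; exists v1.
- by move=> kk a v ha hv; rewrite twist_eq.
Qed.


Lemma main_thm : forall m, (exists z : int, seteq m (sg z m0)) ->
    is_simple_Lambda_module sigma sigmainv H J n act (wspace act m) /\
    forall i : int,
      twisted_iso sigma sigmainv H J n act i (wspace act m)
        (wspace act (sg i m)).
Proof.
move=> m [z hz].
have hzs : seteq (sg z m0) m by move=> x; split => /hz.
have hW v : W (sg z m0) v <-> W m v := wspace_ext act v hzs.
have hW' i v : W (sg i (sg z m0)) v <-> W (sg i m) v.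
  exact: (wspace_ext act v (seteq_simg sigma sigmainv i hzs)).
split; first exact: (simple_ext hW (simple_part z)).
move=> i; have [f [f1 f2 f3 f4 f5]] := twisted_part z i.
exists f; split.
- by move=> v /hW /f1 /hW'.
- by move=> v w /hW hv /hW hw; apply: f2.
- by move=> v w /hW hv /hW hw; apply: f3.
- by move=> w /hW' /f4 [v [hv e]]; exists v; split => //; apply/hW.
- by move=> kk a v ha /hW hv; apply: f5.
Qed.

End Main.

Unset Implicit Arguments.

Theorem lemma3p13
  (k : fieldType) (R : comAlgType k)
  (R_domain : forall a b : R, a * b = 0 -> a = 0 \/ b = 0)
  (sigma : {lrmorphism R -> R}) (sigmainv : R -> R)
  (sK : cancel sigma sigmainv) (sK' : cancel sigmainv sigma)
  (H J : R -> Prop) (HH : is_ideal H) (HJ : is_ideal J)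
  (Inz : forall z : int, exists x, Ik sigma sigmainv H J z x /\ x <> 0)
  (n : nat) (n_gt0 : (0 < n)%N)
  (sigma_n : forall x, iter n sigma x = x)
  (m0 : R -> Prop) (m0_max : is_maximal m0)
  (orbit_size : forall i j : nat, (i < n)%N -> (j < n)%N ->
      seteq (simg sigma sigmainv (Posz i) m0) (simg sigma sigmainv (Posz j) m0) ->
      i = j)
  (no_breaks : forall z : int,
      ~ ssubset (idmul H J) (simg sigma sigmainv 1 (simg sigma sigmainv z m0)))
  (M : zmodType) (act : int -> R -> M -> M)
  (Mmod : is_BR_module sigma sigmainv H J act)
  (Msimple : is_simple_B_module sigma sigmainv H J act)
  (Mweight : is_weight_module act)
  (Msupp : forall m, is_maximal m -> (exists v, wspace act m v /\ v <> 0) ->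
      exists z : int, seteq m (simg sigma sigmainv z m0)) :
  forall m, (exists z : int, seteq m (simg sigma sigmainv z m0)) ->
    is_simple_Lambda_module sigma sigmainv H J n act (wspace act m) /\
    forall i : int,
      twisted_iso sigma sigmainv H J n act i (wspace act m)
        (wspace act (simg sigma sigmainv i m)).
Proof.
exact: (main_thm sK sK' HH HJ n_gt0 sigma_n m0_max orbit_size no_breaks Mmod Msimple Mweight Msupp).
Qed.
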